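(* Let $N$ be a simply connected $2$-step nilpotent Lie group with Lie algebra $\mathfrak n$ and a left-invariant Lorentzian metric $\langle\cdot,\cdot\rangle$ of $pH$-type whose center $\mathfrak Z$ is positive definite, of dimension $m$, and let $\mathfrak E=\mathfrak Z^{\perp}$, of dimension $n$. Then $(N,\langle\cdot,\cdot\rangle)$ is a nilsoliton if and only if $m=1$ and $n=2$ (so that $N$ is the three-dimensional Heisenberg group).
   Context: For $y\in\mathfrak n$ let $J_y$ be defined by $\langle J_y x,w\rangle=\langle y,[x,w]\rangle$ for all $x,w$. Here $\mathfrak n=\mathfrak Z\oplus\mathfrak E$ orthogonally; choose orthonormal bases $\{z_\alpha\}$ of $\mathfrak Z$, $\{e_a\}$ of $\mathfrak E$, $\varepsilon_\alpha=\langle z_\alpha,z_\alpha\rangle$, $\bar\varepsilon_a=\langle e_a,e_a\rangle$. The involution $\iota$ is given by $\iota z_\alpha=\varepsilon_\alpha z_\alpha$, $\iota e_a=\bar\varepsilon_a e_a$, and $j(y)=\iota\circ J_{\iota y}$. The metric is of $pH$-type if $j(z)^2=-\langle z,\iota z\rangle I$ (on $\mathfrak E$) for all $z$ in the center. $\mathrm{Ric}$ is the Ricci operator ($\langle\mathrm{Ric}\,x,y\rangle=\varrho(x,y)$). The metric is a nilsoliton if $\mathrm{Ric}=c\cdot\mathrm{Id}+D$ for some $c\in\mathbb R$ and some derivation $D$ of $\mathfrak n$. *)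

(* Defs.v *)
From HB Require Import structures.
From mathcomp Require Import all_boot all_order all_algebra.
From mathcomp Require Import reals.
Set Implicit Arguments. Unset Strict Implicit. Unset Printing Implicit Defensive.
Import GRing.Theory Num.Theory.
Local Open Scope ring_scope.

(* A d-dimensional real Lie algebra is modelled on row vectors 'rV[R]_d,
   with a bracket br; a linear map is a matrix M acting by x |-> x *m M;
   a scalar product is given by its Gram matrix G: <x,y> = x G y^T. *)

Section MetricLie.
Variables (R : realType) (d : nat).
Notation V := 'rV[R]_d.

Definition ipG (G : 'M[R]_d) (x y : V) : R := (x *m G *m y^T) 0 0.

Definition ev (j : 'I_d) : V := delta_mx 0 j.

(* the vector v with <v, w> = a w for all w (a linear, G nondegenerate) *)
Definition dual (G : 'M[R]_d) (a : V -> R) : V := (\row_j a (ev j)) *m invmx G.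

Definition is_lie_bracket (br : V -> V -> V) : Prop :=
  [/\ forall (a : R) x y z, br (a *: x + y) z = a *: br x z + br y z,
      forall x y, br x y = - br y x &
      forall x y z, br x (br y z) + br y (br z x) + br z (br x y) = 0].

Definition two_step_nilpotent (br : V -> V -> V) : Prop :=
  [/\ is_lie_bracket br,
      forall x y z, br (br x y) z = 0 &
      exists x y, br x y != 0].

Definition center (br : V -> V -> V) (z : V) : Prop := forall x, br z x = 0.

(* Lorentzian: symmetric of signature (d-1,1) (Sylvester normal form) *)
Definition lorentzian (G : 'M[R]_d) : Prop :=
  G^T = G /\ exists P : 'M[R]_d, P \in unitmx /\
    exists i0 : 'I_d, P *m G *m P^T = diag_mx (\row_i (if i == i0 then -1 else 1)).

(* Levi-Civita connection on left-invariant fields (Koszul formula) *)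
Definition koszul (br : V -> V -> V) (G : 'M[R]_d) (x y z : V) : R :=
  2^-1 * (ipG G (br x y) z - ipG G (br y z) x + ipG G (br z x) y).

Definition nabla br G (x y : V) : V := dual G (koszul br G x y).

Definition curv br G (x y z : V) : V :=
  nabla br G x (nabla br G y z) - nabla br G y (nabla br G x z)
  - nabla br G (br x y) z.

(* Ricci tensor rho(x,y) = tr (z |-> R(z,x) y) *)
Definition ricci_form br G (x y : V) : R :=
  \sum_(i < d) (curv br G (ev i) x y) 0 i.

Definition Ric br G (x : V) : V := dual G (ricci_form br G x).

Definition is_derivation (br : V -> V -> V) (D : 'M[R]_d) : Prop :=
  forall x y, br x y *m D = br (x *m D) y + br x (y *m D).

Definition nilsoliton br G : Prop :=
  exists (c : R) (D : 'M[R]_d), is_derivation br D /\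
    forall x, Ric br G x = c *: x + x *m D.

Definition Jop br G (y x : V) : V := dual G (fun w => ipG G y (br x w)).

(* orthonormal basis (rows of B) adapted to n = Z (+) E, with signs eps *)
Definition adapted_orthonormal_basis (G ZM EM B : 'M[R]_d) (eps : 'rV[R]_d) : Prop :=
  [/\ B \in unitmx,
      forall i, eps 0 i = 1 \/ eps 0 i = -1,
      B *m G *m B^T = diag_mx eps &
      forall i, (row i B <= ZM)%MS \/ (row i B <= EM)%MS].

(* the involution iota: iota(row i B) = eps_i (row i B) *)
Definition iotaM (B : 'M[R]_d) (eps : 'rV[R]_d) : 'M[R]_d :=
  invmx B *m diag_mx eps *m B.

Definition jmap br G (I : 'M[R]_d) (y x : V) : V := Jop br G (y *m I) x *m I.

Definition pH_type br G (EM I : 'M[R]_d) : Prop :=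
  forall z, center br z -> forall x, (x <= EM)%MS ->
    jmap br G I z (jmap br G I z x) = - ipG G z (z *m I) *: x.

End MetricLie.

(* Main.v *)
Require Import Defs.
From HB Require Import structures.
From mathcomp Require Import all_boot all_order all_algebra.
From mathcomp Require Import reals.
From mathcomp Require Import ring lra zify.
From Stdlib Require Import Lia.
Set Implicit Arguments. Unset Strict Implicit. Unset Printing Implicit Defensive.
Import Order.TTheory GRing.Theory Num.Theory.
Local Open Scope ring_scope.

Section Basic.
Variables (R : realType) (d : nat) (G : 'M[R]_d).
Hypothesis GT : G^T = G.
Local Notation ip := (ipG G).
Local Notation V := 'rV[R]_d.
Local Notation ev := (@ev R d).

Lemma ipC x y : ip x y = ip y x.
Proof.
rewrite /ipG; have -> : (x *m G *m y^T) 0 0 = ((x *m G *m y^T)^T) 0 0 by rewrite [RHS]mxE.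
by rewrite !trmx_mul trmxK GT mulmxA.
Qed.
Lemma ipDl x y w : ip (x + y) w = ip x w + ip y w.
Proof. by rewrite /ipG !mulmxDl mxE. Qed.
Lemma ipZl a x w : ip (a *: x) w = a * ip x w.
Proof. by rewrite /ipG -!scalemxAl mxE. Qed.
Lemma ipDr x y w : ip w (x + y) = ip w x + ip w y.
Proof. by rewrite ipC ipDl !(ipC w). Qed.
Lemma ipZr a x w : ip w (a *: x) = a * ip w x.
Proof. by rewrite ipC ipZl ipC. Qed.
Lemma ip0l w : ip 0 w = 0.
Proof. by rewrite -(scale0r (0:V)) ipZl mul0r. Qed.
Lemma ip0r w : ip w 0 = 0.
Proof. by rewrite ipC ip0l. Qed.
Lemma ipNl x w : ip (- x) w = - ip x w.
Proof. by rewrite -scaleN1r ipZl mulN1r. Qed.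
Lemma ipNr x w : ip w (- x) = - ip w x.
Proof. by rewrite ipC ipNl ipC. Qed.
Lemma ipBl x y w : ip (x - y) w = ip x w - ip y w.
Proof. by rewrite ipDl ipNl. Qed.
Lemma ipBr x y w : ip w (x - y) = ip w x - ip w y.
Proof. by rewrite ipDr ipNr. Qed.
Lemma ip_suml I r (P : pred I) (F : I -> V) w :
  ip (\sum_(i <- r | P i) F i) w = \sum_(i <- r | P i) ip (F i) w.
Proof. by elim/big_rec2: _ => [|i y1 y2 _ <-]; rewrite ?ip0l ?ipDl. Qed.
Lemma ip_sumr I r (P : pred I) (F : I -> V) w :
  ip w (\sum_(i <- r | P i) F i) = \sum_(i <- r | P i) ip w (F i).
Proof. by rewrite ipC ip_suml; apply: eq_bigr => i _; rewrite ipC. Qed.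
Lemma ip_ev x j : ip x (ev j) = (x *m G) 0 j.
Proof.
rewrite /ipG /Defs.ev mxE (bigD1 j) //= !mxE /= eqxx mulr1 [X in _ + X]big1 ?addr0 // => k /negPf kj.
by rewrite !mxE kj andbF mulr0.
Qed.
End Basic.

Section Main.
Variables (R : realType) (d : nat).
Local Notation V := 'rV[R]_d.
Local Notation ev := (@ev R d).
Variables (br : V -> V -> V) (G ZM EM B : 'M[R]_d) (eps : 'rV[R]_d).
Hypothesis Hnil : two_step_nilpotent br.
Hypothesis Hlor : lorentzian G.
Hypothesis HZ : forall z, (z <= ZM)%MS <-> center br z.
Hypothesis HE : forall x, (x <= EM)%MS <-> (forall z, center br z -> ipG G x z = 0).
Hypothesis Hpos : forall z, center br z -> z != 0 -> 0 < ipG G z z.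
Hypothesis Hbas : adapted_orthonormal_basis G ZM EM B eps.
Local Notation ip := (ipG G).
Local Notation b i := (row i B).
Local Notation e i := (eps 0 i).

Lemma GT : G^T = G. Proof. by case: Hlor. Qed.
Let ipC := ipC GT.
Let ipDr := ipDr GT.
Let ipZr := ipZr GT.
Let ip0r := ip0r GT.
Let ipNr := ipNr GT.
Let ipBr := ipBr GT.
Let ip_sumr := ip_sumr GT.
Lemma epsE i : e i = 1 \/ e i = -1. Proof. by case: Hbas. Qed.
Lemma eps2 i : e i * e i = 1.
Proof. by case: (epsE i) => ->; rewrite ?mulrNN mulr1. Qed.
Lemma BGB : B *m G *m B^T = diag_mx eps. Proof. by case: Hbas. Qed.
Lemma Bunit : B \in unitmx. Proof. by case: Hbas. Qed.

Lemma ipbb i k : ip (b i) (b k) = (i == k)%:R * e i.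
Proof.
have := congr1 (fun M : 'M[R]_d => M i k) BGB; rewrite [in RHS]mxE.
rewrite mulrC mulr_natr => <-.
rewrite /ipG !mxE; apply: eq_bigr => j _; rewrite !mxE; congr (_ * _).
by apply: eq_bigr => l _; rewrite !mxE.
Qed.

Lemma ipbb_same i : ip (b i) (b i) = e i.
Proof. by rewrite ipbb eqxx mul1r. Qed.

Lemma diag_eps2 : diag_mx eps *m diag_mx eps = 1%:M.
Proof.
apply/matrixP => i j; rewrite mul_diag_mx !mxE.
by case: (i == j); rewrite ?mulr1n ?mulr0n ?mulr0 // eps2.
Qed.

Lemma Einv : G *m B^T *m diag_mx eps *m B = 1%:M.
Proof.
apply: mulmx1C; by rewrite !mulmxA BGB diag_eps2.
Qed.

Lemma Gunit : G \in unitmx.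
Proof.
have : (B *m G *m B^T) *m diag_mx eps = 1%:M by rewrite BGB diag_eps2.
move=> /mulmx1_unit [+ _].
by rewrite !unitmx_mul => /andP [/andP [] ].
Qed.

Lemma expand (v : V) : v = \sum_i (e i * ip v (b i)) *: b i.
Proof.
have -> : \sum_i (e i * ip v (b i)) *: b i = (v *m G *m B^T *m diag_mx eps) *m B.
  rewrite mulmx_sum_row; apply: eq_bigr => i _; congr (_ *: _).
  rewrite mul_mx_diag mxE mulrC; congr (_ * _).
  rewrite /ipG !mxE; apply: eq_bigr => j _; by rewrite !mxE.
by rewrite -!mulmxA !(mulmxA G) !(mulmxA _ (diag_mx eps)) Einv mulmx1.
Qed.


Definition linf (f : V -> R) := forall k u v, f (k *: u + v) = k * f u + f v.
Definition linV (f : V -> V) := forall k u v, f (k *: u + v) = k *: f u + f v.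

Lemma linf0 f : linf f -> f 0 = 0.
Proof. move=> h; have := h 1 0 0; rewrite scaler0 addr0 mul1r => H; apply: (addrI (f 0)); by rewrite addr0 -H. Qed.
Lemma linfZ f : linf f -> forall k u, f (k *: u) = k * f u.
Proof. by move=> h k u; rewrite -[k *: u]addr0 h (linf0 h) addr0. Qed.
Lemma linfD f : linf f -> forall u v, f (u + v) = f u + f v.
Proof. by move=> h u v; rewrite -[u]scale1r h mul1r scale1r. Qed.
Lemma linf_sum f I r (P : pred I) (F : I -> V) : linf f ->
  f (\sum_(i <- r | P i) F i) = \sum_(i <- r | P i) f (F i).
Proof. by move=> h; elim/big_rec2: _ => [|i y1 y2 _ <-]; rewrite ?(linf0 h) ?(linfD h). Qed.
Lemma linf_ev f : linf f -> forall w, f w = \sum_j w 0 j * f (ev j).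
Proof.
move=> h w; rewrite {1}[w]row_sum_delta (linf_sum _ _ _ h).
by apply: eq_bigr => j _; rewrite (linfZ h).
Qed.

Lemma linV0 f : linV f -> f 0 = 0.
Proof. move=> h; have := h 1 0 0; rewrite scaler0 addr0 scale1r => H; apply: (addrI (f 0)); by rewrite addr0 -H. Qed.
Lemma linVZ f : linV f -> forall k u, f (k *: u) = k *: f u.
Proof. by move=> h k u; rewrite -[k *: u]addr0 h (linV0 h) addr0. Qed.
Lemma linVD f : linV f -> forall u v, f (u + v) = f u + f v.
Proof. by move=> h u v; rewrite -[u]scale1r h !scale1r. Qed.
Lemma linVN f : linV f -> forall u, f (- u) = - f u.
Proof. by move=> h u; rewrite -scaleN1r (linVZ h) scaleN1r. Qed.
Lemma linVB f : linV f -> forall u v, f (u - v) = f u - f v.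
Proof. by move=> h u v; rewrite (linVD h) (linVN h). Qed.
Lemma linV_sum f I r (P : pred I) (F : I -> V) : linV f ->
  f (\sum_(i <- r | P i) F i) = \sum_(i <- r | P i) f (F i).
Proof. by move=> h; elim/big_rec2: _ => [|i y1 y2 _ <-]; rewrite ?(linV0 h) ?(linVD h). Qed.

Lemma dual_ip (a : V -> R) w : ip (dual G a) w = \sum_j w 0 j * a (ev j).
Proof.
rewrite /ipG /dual -(mulmxA _ (invmx G)) mulVmx ?Gunit // mulmx1 mxE.
by apply: eq_bigr => j _; rewrite !mxE mulrC.
Qed.

Lemma dual_lin (a : V -> R) : linf a -> forall w, ip (dual G a) w = a w.
Proof. by move=> h w; rewrite dual_ip (linf_ev h). Qed.

Lemma ip_ext (u v : V) : (forall w, ip u w = ip v w) -> u = v.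
Proof.
move=> h; have : u *m G = v *m G.
  by apply/rowP => j; rewrite -!ip_ev h.
by move=> /(congr1 (mulmx^~ (invmx G))); rewrite -!mulmxA mulmxV ?Gunit // !mulmx1.
Qed.

Lemma ip_ext0 (u : V) : (forall w, ip u w = 0) -> u = 0.
Proof. by move=> h; apply: ip_ext => w; rewrite h ip0l. Qed.

Lemma brlin : forall a x y z, br (a *: x + y) z = a *: br x z + br y z.
Proof. by case: Hnil => [[]]. Qed.
Lemma brA x y : br x y = - br y x. Proof. by case: Hnil => [[]]. Qed.
Lemma brbr x y z : br (br x y) z = 0. Proof. by case: Hnil. Qed.
Lemma brlinr : forall a x y z, br z (a *: x + y) = a *: br z x + br z y.
Proof. by move=> a x y z; rewrite [LHS]brA brlin opprD -scalerN -!brA. Qed.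
Lemma linbrl y : linV (br^~ y). Proof. by move=> k u v; apply: brlin. Qed.
Lemma linbrr y : linV (br y). Proof. by move=> k u v; apply: brlinr. Qed.
Lemma brxx x : br x x = 0.
Proof.
have h : br x x + br x x = 0 by rewrite {1}brA addNr.
have : (2%:R : R) *: br x x = 0 by rewrite scaler_nat mulr2n.
by move/eqP; rewrite scaler_eq0 pnatr_eq0 /= => /eqP.
Qed.

Local Notation cen := (center br).
Definition inE (x : V) := forall z, cen z -> ip x z = 0.

Lemma cen_br x y : cen (br x y). Proof. by move=> z; apply: brbr. Qed.
Lemma br_cen x z : cen z -> br x z = 0. Proof. by move=> h; rewrite brA h oppr0. Qed.
Lemma cen_lin k z z' : cen z -> cen z' -> cen (k *: z + z').
Proof. by move=> h h' x; rewrite brlin h h' scaler0 addr0. Qed.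
Lemma cen0 : cen 0. Proof. by move=> x; rewrite (linV0 (linbrl x)). Qed.
Lemma cenZ k z : cen z -> cen (k *: z). Proof. by move=> h; rewrite -[_ *: _]addr0; apply: cen_lin => //; apply: cen0. Qed.
Lemma cenD z z' : cen z -> cen z' -> cen (z + z'). Proof. by move=> h h'; rewrite -[z]scale1r; apply: cen_lin. Qed.
Lemma cenN z : cen z -> cen (- z). Proof. by move=> h; rewrite -scaleN1r; apply: cenZ. Qed.
Lemma cen_sum I r (P : pred I) (F : I -> V) : (forall i, P i -> cen (F i)) -> cen (\sum_(i <- r | P i) F i).
Proof. by move=> h; elim/big_rec: _ => [|i y Pi hy]; [apply: cen0 | apply: cenD => //; apply: h]. Qed.

Lemma inE_lin k x y : inE x -> inE y -> inE (k *: x + y).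
Proof. by move=> h h' z hz; rewrite ipDl ipZl h // h' // mulr0 addr0. Qed.
Lemma inE0 : inE 0. Proof. by move=> z _; rewrite ip0l. Qed.
Lemma inEZ k x : inE x -> inE (k *: x). Proof. by move=> h; rewrite -[_ *: _]addr0; apply: inE_lin => //; apply: inE0. Qed.
Lemma inED x y : inE x -> inE y -> inE (x + y). Proof. by move=> h h'; rewrite -[x]scale1r; apply: inE_lin. Qed.
Lemma inEN x : inE x -> inE (- x). Proof. by move=> h; rewrite -scaleN1r; apply: inEZ. Qed.
Lemma inEB x y : inE x -> inE y -> inE (x - y). Proof. by move=> h h'; apply: inED => //; apply: inEN. Qed.
Lemma inE_sum I r (P : pred I) (F : I -> V) : (forall i, P i -> inE (F i)) -> inE (\sum_(i <- r | P i) F i).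
Proof. by move=> h; elim/big_rec: _ => [|i y Pi hy]; [apply: inE0 | apply: inED => //; apply: h]. Qed.

Lemma cenE_ip z x : cen z -> inE x -> ip z x = 0.
Proof. by move=> hz hx; rewrite ipC  // hx. Qed.

Lemma cenE0 z : cen z -> inE z -> z = 0.
Proof.
move=> hz hx; apply/eqP; apply: contraT => nz.
by have := Hpos hz nz; rewrite hx // ltxx.
Qed.

Definition isZ i := (b i <= ZM)%MS.
Lemma rowZ i : isZ i -> cen (b i). Proof. by move/HZ. Qed.
Lemma rowE i : ~~ isZ i -> inE (b i).
Proof.
move=> h; apply/HE; case: Hbas => _ _ _ /(_ i) [h'|//].
by move: h; rewrite /isZ h'.
Qed.
Lemma b_neq0 i : b i != 0.
Proof.
apply/eqP => h; have := ipbb_same i; rewrite h ip0l.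
by case: (epsE i) => -> /eqP; rewrite eq_sym ?oppr_eq0 oner_eq0.
Qed.
Lemma eZ i : isZ i -> e i = 1.
Proof.
move=> h; have := Hpos (rowZ h) (b_neq0 i); rewrite ipbb_same.
by case: (epsE i) => -> //; rewrite ltr0N1.
Qed.

Local Notation J := (Jop br G).
Local Notation N := (nabla br G).
Local Notation K := (koszul br G).

Lemma ipJ y x w : ip (J y x) w = ip y (br x w).
Proof.
apply: dual_lin => k u v; by rewrite brlinr ipDr ipZr.
Qed.

Lemma linJx y : linV (J y).
Proof. move=> k u v; apply: ip_ext => w; by rewrite ipDl ipZl !ipJ brlin ipDr ipZr. Qed.
Lemma linJy x : linV (J^~ x).
Proof. move=> k u v; apply: ip_ext => w; by rewrite ipDl ipZl !ipJ ipDl ipZl. Qed.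
Lemma J_cen y z : cen z -> J y z = 0.
Proof. by move=> h; apply: ip_ext0 => w; rewrite ipJ h ip0r. Qed.
Lemma J_E y x : inE (J y x).
Proof. by move=> z hz; rewrite ipJ br_cen // ip0r. Qed.
Lemma J_Ey y x : inE y -> J y x = 0.
Proof. by move=> h; apply: ip_ext0 => w; rewrite ipJ h //; apply: cen_br. Qed.
Lemma J_skew y x w : ip (J y x) w = - ip x (J y w).
Proof. by rewrite [ip x _]ipC !ipJ [br w x]brA ipNr opprK. Qed.

Lemma ipN x y w : ip (N x y) w = K x y w.
Proof.
apply: dual_lin => k u v; rewrite /koszul.
rewrite ipDr ipZr brlinr brlin !ipDl !ipZl; ring.
Qed.

Lemma linNx y : linV (N^~ y).
Proof.
move=> k u v; apply: ip_ext => w; rewrite ipDl ipZl !ipN /koszul.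
rewrite brlin !ipDl !ipZl !ipDr !ipZr brlinr !ipDl !ipZl; ring.
Qed.
Lemma linNy x : linV (N x).
Proof.
move=> k u v; apply: ip_ext => w; rewrite ipDl ipZl !ipN /koszul.
rewrite brlinr brlin !ipDl !ipZl !ipDr !ipZr; ring.
Qed.

Lemma lin3 (k : R) (a a' c1 c2 c3 c4 : V) :
  k *: a + a' - (k *: c1 + c2) - (k *: c3 + c4) = k *: (a - c1 - c3) + (a' - c2 - c4).
Proof.
apply: ip_ext => w; rewrite !(ipBl, ipDl, ipZl, ipNl).
move: (ip a w) (ip a' w) (ip c1 w) (ip c2 w) (ip c3 w) (ip c4 w) => *; ring.
Qed.

Lemma lin_curv x y : linV (fun u => curv br G u x y).
Proof.
move=> k u v; rewrite /curv brlin !(linNx _) (linNy _); exact: lin3.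
Qed.

Lemma parseval u v : ip u v = \sum_i e i * ip u (b i) * ip (b i) v.
Proof.
rewrite {1}[v]expand ip_sumr; apply: eq_bigr => i _.
by rewrite ipZr (ipC _ v) ; ring.
Qed.

Lemma trace_lemma (f : V -> V) : linV f ->
  \sum_j (f (ev j)) 0 j = \sum_i e i * ip (f (b i)) (b i).
Proof.
move=> hf.
have h1 j : f (ev j) = \sum_i (e i * ip (ev j) (b i)) *: f (b i).
  rewrite {1}[ev j]expand (linV_sum _ _ _ hf); apply: eq_bigr => i _; exact: (linVZ hf).
have h2 u w : ip u w = \sum_j u 0 j * ip (ev j) w.
  by apply: (linf_ev (f := fun u => ip u w)) => k a a'; rewrite ipDl ipZl.
under eq_bigr => j _ do rewrite h1 summxE.
rewrite exchange_big /=; apply: eq_bigr => i _.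
rewrite h2 mulr_sumr; apply: eq_bigr => j _; rewrite mxE; ring.
Qed.

Lemma lin_curv_y u x : linV (curv br G u x).
Proof.
move=> k y y'; rewrite /curv !(linNy _); exact: lin3.
Qed.
Lemma lin_curv_x u y : linV (fun x => curv br G u x y).
Proof.
move=> k x x'; rewrite /curv brlinr !(linNx _) (linNy _); exact: lin3.
Qed.

Lemma ricE x y : ricci_form br G x y = \sum_i e i * ip (curv br G (b i) x y) (b i).
Proof. by rewrite /ricci_form (trace_lemma (lin_curv x y)). Qed.

Lemma ipRic x w : ip (Ric br G x) w = ricci_form br G x w.
Proof.
apply: dual_lin => k u v; rewrite !ricE mulr_sumr -big_split /=.
apply: eq_bigr => i _; by rewrite (lin_curv_y _ _) ipDl ipZl; ring.
Qed.

Lemma linRic : linV (Ric br G).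
Proof.
move=> k u v; apply: ip_ext => w; rewrite ipDl ipZl !ipRic !ricE mulr_sumr -big_split /=.
apply: eq_bigr => i _; by rewrite (lin_curv_x _ _) ipDl ipZl; ring.
Qed.



Lemma curv_term bb x y : (cen bb \/ inE bb) -> inE x ->
  ip (curv br G bb x y) bb = 4^-1 * (ip (J bb y) (J bb x) + ip (J y bb) (J bb x))
     - 3%:R / 4%:R * ip (br bb y) (br bb x).
Proof.
move=> hb hx.
have hbv v : ip (br bb v) bb = 0.
  case: hb => hb; first by rewrite hb ip0l.
  by rewrite ipC hb //; apply: cen_br.
have hA : ip (N bb (N x y)) bb = 0.
  by rewrite ipN /koszul brxx ip0l [br _ bb]brA ipNl hbv oppr0 subr0 addr0 mulr0.
have D1 : K bb y (J bb x) = - 2^-1 * (ip (J bb y) (J bb x) + ip (J y bb) (J bb x)).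
  rewrite /koszul cenE_ip; [|exact: cen_br|exact: J_E].
  rewrite [ip (br y _) bb]ipC -ipJ [ip (br _ bb) y]ipC [br _ bb]brA ipNr -ipJ.
  move: (ip (J bb y) _) (ip (J y bb) _) => P Q; ring.
have D2 : K bb y (br bb x) = 2^-1 * ip (br bb y) (br bb x).
  rewrite /koszul [br y (br bb x)]br_cen; last exact: cen_br.
  by rewrite brbr !ip0l subr0 addr0.
have hB : ip (N x (N bb y)) bb = 2^-1 * (K bb y (J bb x) + K bb y (br bb x)).
  rewrite ipN /koszul (cenE_ip (cen_br _ _) hx) subr0.
  by rewrite [ip (br x _) bb]ipC -ipJ [ip (J _ _) _]ipC ipN [ip (br bb x) _]ipC ipN.
have hC : ip (N (br bb x) y) bb = 2^-1 * ip (br bb y) (br bb x).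
  rewrite ipN /koszul brbr ip0l (br_cen _ (cen_br _ _)) ip0l addr0 sub0r.
  by rewrite [br y bb]brA ipNl opprK.
rewrite /curv !ipBl hA hB hC D1 D2.
move: (ip (J bb y) _) (ip (J y bb) _) (ip (br bb y) _) => P Q S; by field.
Qed.

Lemma row_good i : cen (b i) \/ inE (b i).
Proof. by case h : (isZ i); [left; apply: rowZ | right; apply: rowE; rewrite h]. Qed.

Lemma sumQ y x : \sum_i e i * ip (J y (b i)) (J (b i) x) = 0.
Proof.
rewrite (eq_bigr (fun i => - \sum_k e i * (e k * (ip (J y (b k)) (b i) * ip (b i) (br x (b k)))))); last first.
  move=> i _; rewrite parseval mulr_sumr -sumrN; apply: eq_bigr => k _.
  rewrite (ipJ y (b i) (b k)) [br (b i) _]brA ipNr -(ipJ y (b k) (b i)) [ip (b k) _]ipC (ipJ (b i) x (b k)).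
  move: (ip (J y (b k)) (b i)) (ip (b i) (br x (b k))) => P Q; ring.
rewrite sumrN exchange_big /= big1 ?oppr0 // => k _.
have -> : \sum_i e i * (e k * (ip (J y (b k)) (b i) * ip (b i) (br x (b k)))) =
          e k * ip (J y (b k)) (br x (b k)).
  rewrite [in RHS]parseval mulr_sumr; apply: eq_bigr => i _.
  move: (ip (J y (b k)) (b i)) (ip (b i) (br x (b k))) => P Q; ring.
by rewrite (J_E _ _ (cen_br _ _)) mulr0.
Qed.

Lemma sumS y x : \sum_i e i * ip (br (b i) y) (br (b i) x) =
   \sum_k e k * ip (J (b k) y) (J (b k) x).
Proof.
rewrite (eq_bigr (fun i => \sum_k e i * (e k * (ip (J (b k) y) (b i) * ip (b i) (J (b k) x))))); last first.
  move=> i _; rewrite parseval mulr_sumr; apply: eq_bigr => k _.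
  rewrite [ip (br _ y) _]ipC [br (b i) y]brA [br (b i) x]brA !ipNr -!ipJ [ip (b i) (J _ x)]ipC.
  move: (ip (J (b k) y) (b i)) (ip (J (b k) x) (b i)) => P Q; ring.
rewrite exchange_big /=; apply: eq_bigr => k _.
rewrite [in RHS]parseval mulr_sumr; apply: eq_bigr => i _.
move: (ip (J (b k) y) (b i)) (ip (b i) (J (b k) x)) => P Q; ring.
Qed.

Lemma ric_E x y : inE x ->
  ricci_form br G x y = - 2^-1 * \sum_k e k * ip (J (b k) y) (J (b k) x).
Proof.
move=> hx; rewrite ricE.
have hc i := curv_term y (row_good i) hx.
under eq_bigr => i _ do rewrite hc.
have -> : \sum_i e i * (4^-1 * (ip (J (b i) y) (J (b i) x) + ip (J y (b i)) (J (b i) x))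
     - 3%:R / 4%:R * ip (br (b i) y) (br (b i) x)) =
  4^-1 * (\sum_i e i * ip (J (b i) y) (J (b i) x)) + 4^-1 * (\sum_i e i * ip (J y (b i)) (J (b i) x))
  - 3%:R / 4%:R * (\sum_i e i * ip (br (b i) y) (br (b i) x)).
  rewrite !mulr_sumr -sumrN -!big_split /=; apply: eq_bigr => i _.
  move: (ip (J (b i) y) _) (ip (J y (b i)) _) (ip (br (b i) y) _) => P Q S; ring.
rewrite sumQ sumS; move: (\sum_k _) => T; by field.
Qed.

Lemma curv_termZ bb z x : (cen bb \/ inE bb) -> cen z -> inE x ->
  ip (curv br G bb z x) bb = 4^-1 * ip (J z bb) (J bb x).
Proof.
move=> hb hz hx.
have hbv v : ip (br bb v) bb = 0.
  case: hb => hb; first by rewrite hb ip0l.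
  by rewrite ipC hb //; apply: cen_br.
have hA : ip (N bb (N z x)) bb = 0.
  by rewrite ipN /koszul brxx ip0l [br _ bb]brA ipNl hbv oppr0 subr0 addr0 mulr0.
have hC : N (br bb z) x = 0 by rewrite br_cen // (linV0 (linNx x)).
have hK : K bb x (J z bb) = - 2^-1 * ip (J z bb) (J bb x).
  rewrite /koszul cenE_ip; [|exact: cen_br|exact: J_E].
  rewrite [ip (br _ bb) x](cenE_ip (cen_br _ _) hx) addr0 sub0r.
  by rewrite [ip (br x _) bb]ipC -ipJ ipC mulrN mulNr.
have hB : ip (N z (N bb x)) bb = 2^-1 * K bb x (J z bb).
  rewrite ipN /koszul hz ip0l sub0r (br_cen _ hz) ip0l addr0.
  by rewrite [ip (br _ bb) z]ipC -ipJ J_skew opprK ipN.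
rewrite /curv !ipBl hA hB hC ip0l hK.
move: (ip (J z bb) _) => P; by field.
Qed.

Lemma ric_Z z x : cen z -> inE x -> ricci_form br G z x = 0.
Proof.
move=> hz hx; rewrite ricE.
have hc i := curv_termZ (row_good i) hz hx.
under eq_bigr => i _ do rewrite hc.
rewrite (eq_bigr (fun i => 4^-1 * (e i * ip (J z (b i)) (J (b i) x)))); last first.
  move=> i _; move: (ip _ _) => P; ring.
by rewrite -mulr_sumr sumQ mulr0.
Qed.

Lemma ip_rows p (M : 'M[R]_(p, d)) i j : ip (row i M) (row j M) = (M *m G *m M^T) i j.
Proof.
rewrite /ipG !mxE; apply: eq_bigr => l _; rewrite !mxE; congr (_ * _).
by apply: eq_bigr => l' _; rewrite !mxE.
Qed.

Definition mxv r (v : 'I_r -> V) : 'M[R]_(r, d) := \matrix_(l, j) v l 0 j.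
Lemma row_mxv r (v : 'I_r -> V) l : row l (mxv v) = v l.
Proof. by apply/rowP => j; rewrite !mxE. Qed.

Lemma sub_mxv r (v : 'I_r -> V) x : (x <= mxv v)%MS -> exists a : 'I_r -> R, x = \sum_l a l *: v l.
Proof.
move/submxP => [D ->]; exists (fun l => D 0 l); rewrite mulmx_sum_row.
by apply: eq_bigr => l _; rewrite row_mxv.
Qed.

Lemma orth_rank r p (v w : 'I_r -> V) (M : 'M[R]_(p, d)) :
  (forall l m, ip (v l) (w m) = (l == m)%:R) -> (forall l, (v l <= M)%MS) -> (r <= \rank M)%N.
Proof.
move=> hvw hvM; pose C : 'M[R]_(d, r) := \matrix_(j, m) (G *m (w m)^T) j 0.
have AC : mxv v *m C = 1%:M.
  apply/matrixP => l m; rewrite !mxE -hvw /ipG -mulmxA mxE; apply: eq_bigr => j _.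
  by rewrite !mxE.
have fA : row_free (mxv v) by apply/row_freeP; exists C.
have <- : \rank (mxv v) = r by apply/eqP.
apply: mxrankS; apply/row_subP => l; by rewrite row_mxv.
Qed.

Lemma span_rank r p (v : 'I_r -> V) (M : 'M[R]_(p, d)) :
  (forall x, (x <= M)%MS -> exists a : 'I_r -> R, x = \sum_l a l *: v l) -> (\rank M <= r)%N.
Proof.
move=> h; apply: leq_trans (rank_leq_row (mxv v)); apply: mxrankS.
apply/row_subP => i; have [a ->] := h _ (row_sub i M).
have -> : \sum_l a l *: v l = (\row_l a l) *m mxv v.
  by rewrite mulmx_sum_row; apply: eq_bigr => l _; rewrite row_mxv mxE.
exact: submxMl.
Qed.

Lemma ip_combo r (v : 'I_r -> V) (c : 'I_r -> R) (a : 'I_r -> R) :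
  (forall l m, ip (v l) (v m) = (l == m)%:R * c l) ->
  ip (\sum_l a l *: v l) (\sum_l a l *: v l) = \sum_l c l * a l ^+ 2.
Proof.
move=> h; rewrite ip_suml; apply: eq_bigr => l _; rewrite ipZl ip_sumr (bigD1 l) //= big1.
  by rewrite ipZr h eqxx mul1r addr0; move: (c l) (a l) => *; ring.
by move=> m /negPf ml; rewrite ipZr h eq_sym ml mul0r mulr0.
Qed.

Lemma exists_timelike : exists k, e k = -1.
Proof.
case: Hlor => _ [P [Pu [i0 HP]]].
case: (pickP (fun k => eps 0 k == -1)) => [k /eqP hk|hall]; first by exists k.
exfalso.
have he k : e k = 1 by case: (epsE k) => // h; have := hall k; rewrite h eqxx.
have := ip_rows P i0 i0; rewrite HP !mxE eqxx mulr1n parseval.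
under eq_bigr => i _ do rewrite he mul1r [ip (b i) _]ipC.
move=> h; have : 0 <= \sum_i ip (row i0 P) (b i) * ip (row i0 P) (b i).
  by apply: sumr_ge0 => i _; rewrite -expr2 sqr_ge0.
by rewrite h ler0N1.
Qed.

Lemma timelike_unique k1 k2 : e k1 = -1 -> e k2 = -1 -> k1 = k2.
Proof.
move=> h1 h2; apply/eqP; apply: contraT => hne.
case: Hlor => _ [P [Pu [i0 HP]]].
pose vP l := if l == i0 then 0 else row l P.
have ipP l m : ip (vP l) (vP m) = (l == m)%:R * (if l == i0 then 0 else 1).
  rewrite /vP; have [->|hl] := eqVneq l i0; first by rewrite ?eqxx ip0l mulr0.
  rewrite ?(negPf hl) mulr1.
  have [->|hm] := eqVneq m i0; first by rewrite ?eqxx ip0r ?(negPf hl).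
  by rewrite ?(negPf hm) ip_rows HP !mxE ?(negPf hl).
pose vN (l : 'I_2) := if l == 0 then b k1 else b k2.
have ipN l m : ip (vN l) (vN m) = (l == m)%:R * (-1).
  rewrite /vN; case: l m => [[|[|l]] hl] [[|[|m]] hm] //=;
    by rewrite ?ipbb ?eqxx ?h1 ?h2 ?mul1r ?(negPf hne) ?(negPf (negbTE _)) // eq_sym (negPf hne) mul0r.
have cap : (mxv vP :&: mxv vN = 0)%MS.
  apply/eqP; rewrite -submx0; apply/row_subP => i; set x := row i _.
  have xP : (x <= mxv vP)%MS by apply: submx_trans (row_sub _ _) (capmxSl _ _).
  have xN : (x <= mxv vN)%MS by apply: submx_trans (row_sub _ _) (capmxSr _ _).
  have [a xa] := sub_mxv xP; have [be xb] := sub_mxv xN.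
  have g1 : 0 <= ip x x.
    rewrite {1 2}xa (ip_combo _ ipP); apply: sumr_ge0 => l _.
    by case: (l == i0); rewrite ?mul0r // mul1r sqr_ge0.
  have g2 : ip x x = - \sum_l be l ^+ 2.
    rewrite {1 2}xb (ip_combo _ ipN) -sumrN; apply: eq_bigr => l _; by rewrite mulN1r.
  have s0 : \sum_l be l ^+ 2 = 0.
    apply/eqP; rewrite eq_le sumr_ge0 ?andbT; last by move=> l _; apply: sqr_ge0.
    by rewrite -oppr_ge0 -g2.
  have b0 l : be l = 0.
    have := @psumr_eq0P _ _ predT (fun l => be l ^+ 2) (fun l _ => sqr_ge0 (be l)) s0 l isT.
    by move/eqP; rewrite sqrf_eq0 => /eqP.
  by rewrite xb big1 ?sub0mx // => l _; rewrite b0 scale0r.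
have rP : (d <= \rank (mxv vP) + 1)%N.
  have rPd : \rank P = d by apply: mxrank_unit.
  have sub : (P <= mxv vP + row i0 P)%MS.
    apply/row_subP => l; have [->|hl] := eqVneq l i0; first exact: addsmxSr.
    apply: submx_trans (addsmxSl _ _); have -> : row l P = row l (mxv vP) by rewrite row_mxv /vP (negPf hl).
    exact: row_sub.
  rewrite -{1}rPd; apply: leq_trans (mxrankS sub) _.
  apply: leq_trans ((mxrank_adds_leqif _ _).1) _; rewrite leq_add2l; exact: rank_leq_row.
have rN : (2 <= \rank (mxv vN))%N.
  apply: (@orth_rank _ _ vN (fun m => - vN m)); last by move=> l; rewrite -row_mxv row_sub.
  by move=> l m; rewrite ipNr ipN mulrN1 opprK.
have := mxrank_disjoint_sum cap; have := rank_leq_col (mxv vP + mxv vN)%MS.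
move=> hc hs; move: rP rN; rewrite hs in hc; move: hc.
move: (\rank (mxv vP)) (\rank (mxv vN)) => a c; lia.
Qed.

Definition vZ (v : V) := \sum_(i | isZ i) (e i * ip v (b i)) *: b i.
Definition vE (v : V) := \sum_(i | ~~ isZ i) (e i * ip v (b i)) *: b i.
Lemma splitv v : v = vZ v + vE v.
Proof. by rewrite {1}[v]expand (bigID isZ). Qed.
Lemma cen_vZ v : cen (vZ v).
Proof. by apply: cen_sum => i hi; apply: cenZ; apply: rowZ. Qed.
Lemma inE_vE v : inE (vE v).
Proof. by apply: inE_sum => i hi; apply: inEZ; apply: rowE. Qed.

Lemma cen_expand z : cen z -> z = \sum_(i | isZ i) ip z (b i) *: b i.
Proof.
move=> hz; rewrite {1}[z]splitv /vE big1 ?addr0.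
  by apply: eq_bigr => i hi; rewrite eZ // mul1r.
by move=> i hi; rewrite (cenE_ip hz (rowE hi)) mulr0 scale0r.
Qed.

Lemma orthE_cen v : (forall x, inE x -> ip v x = 0) -> cen v.
Proof.
move=> h; rewrite [v]splitv /vE big1 ?addr0; first exact: cen_vZ.
by move=> i hi; rewrite h ?mulr0 ?scale0r //; apply: rowE.
Qed.

Lemma br_vZ v y : br (vZ v) y = 0. Proof. exact: cen_vZ. Qed.

Section PH.
Variable k0 : 'I_d.
Hypothesis hk0 : e k0 = -1.
Hypothesis Hph : pH_type br G EM (iotaM B eps).
Local Notation io := (iotaM B eps).
Local Notation e0 := (b k0).

Lemma k0_notZ : ~~ isZ k0.
Proof. by apply/negP => /eZ; rewrite hk0 => h; lra. Qed.
Lemma e0_E : inE e0. Proof. exact: rowE k0_notZ. Qed.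
Lemma e_other i : i != k0 -> e i = 1.
Proof. move=> h; case: (epsE i) => // hi; by rewrite (timelike_unique hi hk0) eqxx in h. Qed.

Lemma iota_b i : b i *m io = e i *: b i.
Proof.
rewrite /iotaM !mulmxA -row_mul mulmxV ?Bunit // row1.
have -> : (delta_mx 0 i : 'rV[R]_d) *m diag_mx eps = e i *: delta_mx 0 i.
  apply/rowP => j; rewrite mul_mx_diag !mxE; case: (j =P i) => [->|/eqP hj].
    by rewrite eqxx mulr1 mul1r.
  by rewrite andbF mul0r mulr0.
by rewrite -scalemxAl -matrix.rowE.
Qed.

Lemma iotaE v : v *m io = \sum_i ip v (b i) *: b i.
Proof.
rewrite {1}[v]expand mulmx_suml; apply: eq_bigr => i _.
by rewrite -scalemxAl iota_b scalerA mulrAC eps2 mul1r.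
Qed.

Lemma iota_formula v : v *m io = v + (2%:R * ip v e0) *: e0.
Proof.
rewrite iotaE {2}[v]expand (bigD1 k0) //= [X in _ = X + _](bigD1 k0) //= hk0.
have -> : \sum_(i < d | i != k0) (e i * ip v (b i)) *: b i = \sum_(i < d | i != k0) ip v (b i) *: b i.
  by apply: eq_bigr => i hi; rewrite e_other // mul1r.
rewrite addrAC -scalerDl; congr (_ *: _ + _); move: (ip v e0) => a; ring.
Qed.

Lemma iotaI : io *m io = 1%:M.
Proof.
rewrite /iotaM -!mulmxA [B *m (invmx B *m _)]mulmxA mulmxV ?Bunit // mul1mx.
rewrite [diag_mx eps *m (diag_mx eps *m _)]mulmxA diag_eps2 mul1mx.
by rewrite mulVmx ?Bunit.
Qed.
Lemma iota2 (v : V) : v *m io *m io = v.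
Proof. by rewrite -mulmxA iotaI mulmx1. Qed.

Lemma iota_cen z : cen z -> z *m io = z.
Proof. by move=> hz; rewrite iota_formula (cenE_ip hz e0_E) mulr0 scale0r addr0. Qed.

Lemma iota_e0 : e0 *m io = - e0.
Proof. by rewrite iota_b hk0 scaleN1r. Qed.

Lemma Jsq z x : cen z -> inE x ->
  J z (J z x) = - ip z z *: (x *m io) + (2%:R * ip x (J z e0)) *: J z e0.
Proof.
move=> hz hx.
have h := Hph hz (proj2 (HE x) hx); rewrite /jmap (iota_cen hz) in h.
have h2 := congr1 (mulmx^~ io) h; rewrite /= iota2 -scalemxAl in h2.
rewrite iota_formula (linVD (linJx z)) (linVZ (linJx z)) J_skew in h2.
apply: ip_ext => w; have := congr1 (ip^~ w) h2; rewrite /= !ipDl !ipZl.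
move: (ip (J z (J z x)) w) (ip (J z e0) w) (ip x (J z e0)) (ip z z) (ip (x *m io) w) => A F t c X.
move=> hh; rewrite -hh; ring.
Qed.

Lemma Jf_e0 z : ip (J z e0) e0 = 0.
Proof. by rewrite ipJ brxx ip0r. Qed.

Lemma Jsq_e0 z : cen z -> J z (J z e0) = ip z z *: e0.
Proof.
move=> hz; rewrite (Jsq hz e0_E) iota_e0 ipC Jf_e0 mulr0 scale0r addr0.
by rewrite scalerN -scaleNr opprK.
Qed.

Lemma ipff z : cen z -> ip (J z e0) (J z e0) = ip z z.
Proof.
move=> hz; have := J_skew z (J z e0) e0; rewrite Jsq_e0 // ipZl ipbb_same hk0.
by move=> h; apply: oppr_inj; rewrite -h mulrN1.
Qed.

Lemma iota_f z : (J z e0) *m io = J z e0.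
Proof. by rewrite iota_formula Jf_e0 mulr0 scale0r addr0. Qed.

Local Notation fk k := (J (b k) e0).

Lemma ip_fk j k : isZ j -> isZ k -> ip (fk j) (fk k) = (j == k)%:R.
Proof.
move=> hj hk; have [<-|hne] := eqVneq j k.
  by rewrite (ipff (rowZ hj)) ipbb_same eZ.
have hz : cen (b j + b k) by apply: cenD; apply: rowZ.
have := ipff hz; rewrite (linVD (linJy e0)) !ipDl !ipDr (ipff (rowZ hj)) (ipff (rowZ hk)).
rewrite !ipbb_same (ipbb j k) (ipbb k j) (negPf hne) eq_sym (negPf hne) !mul0r (ipC (fk k)).
rewrite -[false%:R]/(0:R); move: (ip (fk j) (fk k)) => t h; lra.
Qed.

Definition mZ : R := \sum_(k | isZ k) 1.
Local Notation Ric := (Ric br G).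

Lemma Ric_E x : inE x -> Ric x = 2^-1 *: \sum_(k | isZ k) J (b k) (J (b k) x).
Proof.
move=> hx; apply: ip_ext => w; rewrite ipRic ric_E // ipZl ip_suml (bigID isZ) /= [X in _ + X]big1.
  rewrite addr0 !mulr_sumr; apply: eq_bigr => k hk.
  rewrite eZ // J_skew (ipC w); move: (ip (J (b k) (J (b k) x)) w) => t; ring.
by move=> k hk; rewrite (J_Ey w (rowE hk)) ip0l mulr0.
Qed.

Lemma Ric_E2 x : inE x -> Ric x = - (mZ / 2%:R) *: (x *m io) + \sum_(k | isZ k) ip x (fk k) *: fk k.
Proof.
move=> hx; rewrite Ric_E //.
under eq_bigr => k hk do rewrite (Jsq (rowZ hk) hx) ipbb_same (eZ hk).
apply: ip_ext => w; rewrite ipZl ipDl ipZl !ip_suml /mZ.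
rewrite mulNr mulr_suml mulr_suml -sumrN mulr_sumr -big_split /=.
apply: eq_bigr => k hk; rewrite ipDl !ipZl.
move: (ip (x *m io) w) (ip (fk k) w) (ip x (fk k)) => X F t; by field.
Qed.

Lemma Ric_e0 : Ric e0 = (mZ / 2%:R) *: e0.
Proof.
rewrite (Ric_E2 e0_E) iota_e0 big1 ?addr0 => [|k hk]; last by rewrite ipC Jf_e0 scale0r.
by rewrite scalerN scaleNr opprK.
Qed.

Lemma Ric_fk j : isZ j -> Ric (fk j) = (1 - mZ / 2%:R) *: fk j.
Proof.
move=> hj; rewrite (Ric_E2 (J_E _ _)) iota_f (bigD1 j) //= big1 => [|k /andP [hk hkj]].
  by rewrite ip_fk // eqxx scale1r addr0 scalerBl scale1r addrC scaleNr.
by rewrite ip_fk // eq_sym (negPf hkj) scale0r.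
Qed.

Lemma Ric_w w : inE w -> ip w e0 = 0 -> (forall k, isZ k -> ip w (fk k) = 0) ->
  Ric w = - (mZ / 2%:R) *: w.
Proof.
move=> hw h0 hf; rewrite (Ric_E2 hw) iota_formula h0 mulr0 scale0r addr0 big1 ?addr0 //.
by move=> k hk; rewrite hf // scale0r.
Qed.

Lemma br_e0_fk k : isZ k -> br e0 (fk k) = b k.
Proof.
move=> hk; rewrite (cen_expand (cen_br _ _)) (bigD1 k) //= big1 ?addr0.
  by rewrite ipC -ipJ ip_fk // eqxx scale1r.
move=> i /andP [hi hik]; by rewrite ipC -ipJ ip_fk // (negPf hik) scale0r.
Qed.

Lemma mZ_ge j : isZ j -> 1 <= mZ.
Proof.
move=> hj; rewrite /mZ (bigD1 j) //= lerDl; apply: sumr_ge0 => *; exact: ler01.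
Qed.

Lemma mZ_ge2 j k : isZ j -> isZ k -> j != k -> 2%:R <= mZ.
Proof.
move=> hj hk hjk; rewrite /mZ (bigD1 j) //= (bigD1 k) /=; last by rewrite hk eq_sym hjk.
rewrite addrA lerDl; apply: sumr_ge0 => *; exact: ler01.
Qed.

Lemma exists_Z : exists j, isZ j.
Proof.
case: Hnil => _ _ [x [y hxy]].
case: (pickP isZ) => [j hj|hn]; first by exists j.
by move: hxy; rewrite (cen_expand (cen_br _ _)) big_pred0 ?eqxx.
Qed.

Definition wof (x : V) := x + ip x e0 *: e0 - \sum_(k | isZ k) ip x (fk k) *: fk k.

Lemma wof_E x : inE x -> inE (wof x).
Proof.
move=> hx; apply: inEB; first by apply: inED => //; apply: inEZ; exact: e0_E.
by apply: inE_sum => k _; apply: inEZ; apply: J_E.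
Qed.
Lemma wof_e0 x : ip (wof x) e0 = 0.
Proof.
rewrite /wof ipBl ipDl ipZl ipbb_same hk0 ip_suml big1 ?subr0; first by rewrite mulrN1 subrr.
by move=> k _; rewrite ipZl Jf_e0 mulr0.
Qed.
Lemma wof_f x j : isZ j -> ip (wof x) (fk j) = 0.
Proof.
move=> hj; rewrite /wof ipBl ipDl ipZl (ipC e0) Jf_e0 mulr0 addr0 ip_suml (bigD1 j) //= big1 ?addr0.
  by rewrite ipZl ip_fk // eqxx mulr1 subrr.
by move=> k /andP [hk hkj]; rewrite ipZl ip_fk // (negPf hkj) mulr0.
Qed.
Lemma wof_eq x : x = wof x - ip x e0 *: e0 + \sum_(k | isZ k) ip x (fk k) *: fk k.
Proof. by apply: ip_ext => y; rewrite /wof !(ipDl, ipBl, ipNl); ring. Qed.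

Section Sol.
Variables (c : R) (D : 'M[R]_d).
Hypothesis hD : is_derivation br D.
Hypothesis hR : forall x, Ric x = c *: x + x *m D.

Lemma xD x : x *m D = Ric x - c *: x.
Proof. by rewrite hR addrC addKr. Qed.

Lemma eig_D x y (l m : R) : Ric x = l *: x -> Ric y = m *: y ->
  br x y *m D = (l + m - 2%:R * c) *: br x y.
Proof.
move=> hx hy; rewrite hD !xD hx hy -!scalerBl (linVZ (linbrl y)) (linVZ (linbrr x)) -scalerDl.
congr (_ *: _); ring.
Qed.

Lemma bk_D k : isZ k -> b k *m D = (1 - 2%:R * c) *: b k.
Proof.
move=> hk; rewrite -(br_e0_fk hk) (eig_D Ric_e0 (Ric_fk hk)); congr (_ *: _); ring.
Qed.

Lemma cen_D z : cen z -> z *m D = (1 - 2%:R * c) *: z.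
Proof.
move=> hz; rewrite (cen_expand hz) mulmx_suml scaler_sumr; apply: eq_bigr => i hi.
by rewrite -scalemxAl bk_D // !scalerA mulrC.
Qed.

Lemma eig_br x y (l m : R) : Ric x = l *: x -> Ric y = m *: y -> l + m - 1 != 0 -> br x y = 0.
Proof.
move=> hx hy hne; have := eig_D hx hy; rewrite cen_D; last exact: cen_br.
move/eqP; rewrite -subr_eq0 -scalerBl scaler_eq0 => /orP [h|/eqP //].
have ee : 1 - 2%:R * c - (l + m - 2%:R * c) = - (l + m - 1) by ring.
by rewrite ee oppr_eq0 (negPf hne) in h.
Qed.

Lemma wof_zero x : inE x -> wof x = 0.
Proof.
move=> hx; have [j hj] := exists_Z.
have m1 := mZ_ge hj.
have hw y : inE y -> Ric (wof y) = - (mZ / 2%:R) *: wof y.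
  by move=> hy; apply: Ric_w; [apply: wof_E | apply: wof_e0 | move=> k hk; apply: wof_f].
set w := wof x.
have bw_e0 : br w e0 = 0.
  apply: (eig_br (hw _ hx) Ric_e0); have -> : - (mZ / 2%:R) + mZ / 2%:R - 1 = -1 by ring.
  by rewrite oppr_eq0 oner_eq0.
have bw_f k : isZ k -> br w (fk k) = 0.
  move=> hk; apply: (eig_br (hw _ hx) (Ric_fk hk)).
  have -> : - (mZ / 2%:R) + (1 - mZ / 2%:R) - 1 = - mZ by field.
  by rewrite oppr_eq0; apply/eqP => h; move: m1; rewrite h; lra.
have bw_w y : inE y -> br w (wof y) = 0.
  move=> hy; apply: (eig_br (hw _ hx) (hw _ hy)).
  have -> : - (mZ / 2%:R) + - (mZ / 2%:R) - 1 = - (mZ + 1) by field.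
  by apply/eqP => h; lra.
have cw : cen w.
  move=> y; rewrite (splitv y) (linVD (linbrr w)) (br_cen _ (cen_vZ y)).
  rewrite GRing.add0r.
  rewrite (wof_eq (vE y)) (linVD (linbrr w)) (linVB (linbrr w)) (linVZ (linbrr w)) bw_e0 scaler0 subr0.
  rewrite (bw_w _ (inE_vE y)) GRing.add0r (linV_sum _ _ _ (linbrr w)) big1 // => k hk.
  by rewrite (linVZ (linbrr w)) bw_f // scaler0.
exact: cenE0 cw (wof_E hx).
Qed.

Lemma E_span x : inE x -> x = - ip x e0 *: e0 + \sum_(k | isZ k) ip x (fk k) *: fk k.
Proof. by move=> hx; rewrite {1}(wof_eq x) wof_zero // sub0r scaleNr. Qed.

Lemma Z_unique j k : isZ j -> isZ k -> j = k.
Proof.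
move=> hj hk; apply/eqP; apply: contraT => hjk.
have m2 := mZ_ge2 hj hk hjk.
have bff l : isZ l -> br (fk k) (fk l) = 0.
  move=> hl; have [<-|hkl] := eqVneq k l; first exact: brxx.
  apply: (eig_br (Ric_fk hk) (Ric_fk hl)).
  have -> : 1 - mZ / 2%:R + (1 - mZ / 2%:R) - 1 = 1 - mZ by field.
  by apply/eqP => h; lra.
have J0 : J (b j) (fk k) = 0.
  apply: ip_ext0 => y; rewrite ipJ (splitv y) (linVD (linbrr _)) (br_cen _ (cen_vZ y)) add0r.
  rewrite (E_span (inE_vE y)) (linVD (linbrr _)) (linVZ (linbrr _)) brA (br_e0_fk hk).
  rewrite (linV_sum _ _ _ (linbrr _)) big1 ?addr0; last by move=> l hl; rewrite (linVZ (linbrr _)) bff // scaler0.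
  by rewrite ipZr ipNr ipbb (negPf hjk) mul0r oppr0 mulr0.
have := Jsq (rowZ hj) (J_E (b k) e0); rewrite J0 (linV0 (linJx _)) iota_f ipbb_same eZ //.
rewrite ip_fk // eq_sym (negPf hjk) mulr0 scale0r addr0 scaleN1r => /eqP; rewrite eq_sym oppr_eq0 => /eqP hf.
by have := ip_fk hk hk; rewrite hf ip0l eqxx => /eqP; rewrite eq_sym oner_eq0.
Qed.
End Sol.

Lemma Z_rank1 j : isZ j -> (forall k, isZ k -> k = j) -> \rank ZM = 1%N.
Proof.
move=> hj hu; apply/eqP; rewrite eqn_leq; apply/andP; split.
  apply: (@span_rank 1 _ (fun _ => b j)) => x /HZ hx.
  exists (fun _ => ip x (b j)); rewrite big_ord1 {1}(cen_expand hx) (bigD1 j) //= big1 ?addr0 //.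
  by move=> i /andP [hi hij]; rewrite (hu i hi) eqxx in hij.
apply: (@orth_rank 1 _ (fun _ => b j) (fun _ => b j)) => [l m|l]; last exact: hj.
by rewrite !ord1 eqxx ipbb_same eZ.
Qed.

Definition v2 j (l : 'I_2) : V := if l == 0 then e0 else fk j.
Definition w2 j (l : 'I_2) : V := if l == 0 then - e0 else fk j.

Lemma E_rank2 j : isZ j -> (forall x, inE x -> x = - ip x e0 *: e0 + ip x (fk j) *: fk j) ->
  \rank EM = 2%N.
Proof.
move=> hj hsp; apply/eqP; rewrite eqn_leq; apply/andP; split.
  apply: (@span_rank 2 _ (v2 j)) => x /HE hx.
  exists (fun l => if l == 0 then - ip x e0 else ip x (fk j)).
  by rewrite big_ord_recr big_ord1 /= /v2 /=; apply: hsp.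
apply: (@orth_rank 2 _ (v2 j) (w2 j)) => [l m|l].
  rewrite /v2 /w2; case: l m => [[|[|l]] hl] [[|[|m]] hm] //=.
  by rewrite ipNr ipbb_same hk0 opprK.
  by rewrite ipC Jf_e0.
  by rewrite ipNr Jf_e0 oppr0.
  by rewrite ip_fk // eqxx.
apply/HE; rewrite /v2; case: (l == 0); [exact: e0_E | exact: J_E].
Qed.

Lemma dir1 : nilsoliton br G -> (\rank ZM = 1 /\ \rank EM = 2)%N.
Proof.
case=> c [D [hD hR]]; have [j hj] := exists_Z.
have hu k : isZ k -> k = j by move=> hk; apply: (Z_unique hD hR hk hj).
split; first exact: Z_rank1 hj hu.
apply: (E_rank2 hj) => x hx; rewrite {1}(E_span hD hR hx) (bigD1 j) //= big1 ?addr0 //.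
by move=> i /andP [hi hij]; rewrite (hu i hi) eqxx in hij.
Qed.

Definition v3 j w (l : 'I_3) : V := if l == 0 then e0 else if l == 1 then fk j else w.
Definition w3 j w (l : 'I_3) : V := if l == 0 then - e0 else if l == 1 then fk j else (ip w w)^-1 *: w.

Lemma ipww_pos w : ip w e0 = 0 -> w != 0 -> ip w w != 0.
Proof.
move=> h0 hw; have hi : w *m io = w by rewrite iota_formula h0 mulr0 scale0r addr0.
have : ip w (w *m io) = \sum_i ip w (b i) ^+ 2.
  by rewrite iotaE ip_sumr; apply: eq_bigr => i _; rewrite ipZr expr2 mulrC.
rewrite hi => h; apply: contra hw; rewrite h => /eqP s0.
have b0 i : ip w (b i) = 0.
  have := @psumr_eq0P _ _ predT (fun i => ip w (b i) ^+ 2) (fun i _ => sqr_ge0 _) s0 i isT.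
  by move/eqP; rewrite sqrf_eq0 => /eqP.
apply/eqP; rewrite [w]expand big1 // => i _; by rewrite b0 mulr0 scale0r.
Qed.

Lemma dir2 : (\rank ZM = 1 /\ \rank EM = 2)%N -> nilsoliton br G.
Proof.
case=> rZ rE; have [j hj] := exists_Z.
have hu k : isZ k -> k = j.
  move=> hk; apply/eqP; apply: contraT => hkj.
  have : (2 <= \rank ZM)%N.
    apply: (@orth_rank 2 _ (fun l : 'I_2 => if l == 0 then b j else b k) (fun l : 'I_2 => if l == 0 then b j else b k)) => [l m|l].
      case: l m => [[|[|l]] hl] [[|[|m]] hm] //=.
      by rewrite ipbb_same eZ.
      by rewrite ipbb eq_sym (negPf hkj) mul0r.
      by rewrite ipbb (negPf hkj) mul0r.
      by rewrite ipbb_same eZ.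
    by case: (l == 0).
  by rewrite rZ.
have mZ1 : mZ = 1.
  rewrite /mZ (bigD1 j) //= big1 ?addr0 // => i /andP [hi hij].
  by rewrite (hu i hi) eqxx in hij.
have sumj (F : 'I_d -> V) : \sum_(k | isZ k) F k = F j.
  rewrite (bigD1 j) //= big1 ?addr0 // => i /andP [hi hij].
  by rewrite (hu i hi) eqxx in hij.
have wz x : inE x -> wof x = 0.
  move=> hx; apply/eqP; apply: contraT => hw.
  have hwp := ipww_pos (wof_e0 x) hw.
  have : (3 <= \rank EM)%N.
    apply: (@orth_rank 3 _ (v3 j (wof x)) (w3 j (wof x))) => [l m|l].
      rewrite /v3 /w3; case: l m => [[|[|[|l]]] hl] [[|[|[|m]]] hm] //=.
      by rewrite ipNr ipbb_same hk0 opprK.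
      by rewrite ipC Jf_e0.
      by rewrite ipZr ipC wof_e0 mulr0.
      by rewrite ipNr Jf_e0 oppr0.
      by rewrite ip_fk // eqxx.
      by rewrite ipZr ipC wof_f // mulr0.
      by rewrite ipNr wof_e0 oppr0.
      by rewrite wof_f.
      by rewrite ipZr mulVf.
    apply/HE; rewrite /v3; case: (l == 0); first exact: e0_E.
    case: (l == 1); [exact: J_E | exact: wof_E].
  by rewrite rE.
have spanE x : inE x -> x = - ip x e0 *: e0 + ip x (fk j) *: fk j.
  by move=> hx; rewrite {1}(wof_eq x) wz // sub0r scaleNr sumj.
have RicE x : inE x -> Ric x = 2^-1 *: x.
  move=> hx; rewrite {1}(spanE x hx) (linVD linRic) !(linVZ linRic) Ric_e0 (Ric_fk hj) mZ1.
  rewrite {3}(spanE x hx) scalerDr !scalerA; congr (_ *: _ + _ *: _); by field.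
have cenj z : cen z -> z = ip z (b j) *: b j by move=> hz; rewrite {1}(cen_expand hz) sumj.
have RicZc z : cen z -> cen (Ric z).
  by move=> hz; apply: orthE_cen => y0 hy0; rewrite ipRic ric_Z.
set mu := ip (Ric (b j)) (b j).
have RicZ z : cen z -> Ric z = mu *: z.
  move=> hz; rewrite {1}(cenj z hz) (linVZ linRic) (cenj _ (RicZc _ (rowZ hj))) -/mu.
  by rewrite scalerA mulrC -scalerA -cenj.
pose cc := 1 - mu.
pose Dm : 'M[R]_d := \matrix_(i, k) ((Ric (ev i) - cc *: ev i) 0 k).
have lf : linV (fun v => Ric v - cc *: v).
  move=> k u v; rewrite (linVD linRic) (linVZ linRic) scalerDr !scalerA mulrC -scalerA.
  apply: ip_ext => w; rewrite !(ipDl, ipBl, ipZl, ipNl).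
  move: (ip (Ric u) w) (ip (Ric v) w) (ip (cc *: u) w) (ip v w) => *; ring.
have xDm (v0 : V) : v0 *m Dm = Ric v0 - cc *: v0.
  rewrite mulmx_sum_row {2 3}[v0]row_sum_delta (linV_sum _ _ _ lf); apply: eq_bigr => i _.
  rewrite (linVZ lf); congr (_ *: _); apply/rowP => k; by rewrite !mxE.
rewrite /nilsoliton; exists cc; exists Dm; split; last by move=> v0; rewrite xDm addrC subrK.
have brR x y : br (Ric x) y = 2^-1 *: br x y.
  rewrite (splitv x) (linVD linRic) (RicZ _ (cen_vZ x)) (RicE _ (inE_vE x)).
  by rewrite !(linVD (linbrl y)) !(linVZ (linbrl y)) !br_vZ scaler0 !GRing.add0r.
move=> x y; rewrite !xDm (RicZ _ (cen_br x y)) (linVB (linbrl y)) (linVB (linbrr x)).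
rewrite (linVZ (linbrl y)) (linVZ (linbrr x)) /= brR [br x (Ric y)]brA brR.
apply: ip_ext => w; rewrite !(ipDl, ipBl, ipZl, ipNl) [br y x]brA ipNl.
rewrite /cc /mu; move: (ip (Ric (b j)) (b j)) (ip (br x y) w) => m t; by field.
Qed.

End PH.
End Main.

Theorem mainTheorem3 (R : realType) (d : nat)
  (br : 'rV[R]_d -> 'rV[R]_d -> 'rV[R]_d) (G ZM EM B : 'M[R]_d) (eps : 'rV[R]_d) :
  two_step_nilpotent br ->
  lorentzian G ->
  (forall z, (z <= ZM)%MS <-> center br z) ->
  (forall x, (x <= EM)%MS <-> (forall z, center br z -> ipG G x z = 0)) ->
  (forall z, center br z -> z != 0 -> 0 < ipG G z z) ->
  adapted_orthonormal_basis G ZM EM B eps ->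
  pH_type br G EM (iotaM B eps) ->
  (nilsoliton br G <-> (\rank ZM = 1 /\ \rank EM = 2)%N).
Proof.
move=> Hnil Hlor HZ HE Hpos Hbas Hph.
have [k0 hk0] := exists_timelike Hlor Hbas.
split.
  exact: (dir1 Hnil Hlor HZ HE Hpos Hbas hk0 Hph).
exact: (dir2 Hnil Hlor HZ HE Hpos Hbas hk0 Hph).
Qed.
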